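(* Let $G$ be a Polish group that is not locally compact. Then every compact subset of $G$ is right Haar null.
   Context: A Polish group is a topological group whose topology is separable and completely metrizable. A set $A\subseteq G$ is right Haar null if there are a Borel set $B\supseteq A$ and a Borel probability measure $\mu$ on $G$ such that $\mu(Bg)=0$ for every $g\in G$. *)

(* Defs.v *)
From HB Require Import structures.
From mathcomp Require Import all_boot all_order all_algebra.
From mathcomp Require Import all_classical all_reals all_analysis.
From mathcomp Require Import Rstruct Rstruct_topology.
From Stdlib Require Import Rdefinitions.

Set Implicit Arguments.
Unset Strict Implicit.
Unset Printing Implicit Defensive.

Import Order.TTheory GRing.Theory Num.Theory.
Local Open Scope classical_set_scope.
Local Open Scope ring_scope.

Notation RR := Rdefinitions.R.

Definition is_topological_group (G : ptopologicalType)
    (mul : G -> G -> G) (inv : G -> G) (one : G) : Prop :=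
  [/\ (forall x y z, mul x (mul y z) = mul (mul x y) z),
      (forall x, mul one x = x /\ mul x one = x),
      (forall x, mul (inv x) x = one /\ mul x (inv x) = one),
      continuous (fun p : G * G => mul p.1 p.2)
    & continuous inv].

Definition separable_space (G : topologicalType) : Prop :=
  exists D : set G, countable D /\ dense D.

Definition is_metric (G : Type) (d : G -> G -> RR) : Prop :=
  [/\ (forall x y, 0 <= d x y),
      (forall x y, d x y = 0 <-> x = y),
      (forall x y, d x y = d y x)
    & (forall x y z, d x z <= d x y + d y z)].

Definition metric_induces_topology (G : topologicalType) (d : G -> G -> RR)
  : Prop :=
  forall (x : G) (A : set G),
    nbhs x A <-> exists2 eps : RR, 0 < eps & [set y | d x y < eps] `<=` A.

Definition complete_metric (G : Type) (d : G -> G -> RR) : Prop :=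
  forall u : nat -> G,
    (forall eps : RR, 0 < eps ->
       exists N : nat, forall m n : nat, leq N m -> leq N n ->
         d (u m) (u n) < eps) ->
    exists l : G, forall eps : RR, 0 < eps ->
       exists N : nat, forall n : nat, leq N n -> d (u n) l < eps.

Definition completely_metrizable (G : topologicalType) : Prop :=
  exists d : G -> G -> RR,
    [/\ is_metric d, metric_induces_topology d & complete_metric d].

Definition polish_space (G : topologicalType) : Prop :=
  separable_space G /\ completely_metrizable G.

Definition borel (G : ptopologicalType) : set (set G) := <<s @open G >>.

Definition borel_probability (G : ptopologicalType) :=
  probability (g_sigma_algebraType (@open G)) RR.

Definition rtranslate (G : Type) (mul : G -> G -> G) (B : set G) (g : G)
  : set G := [set mul b g | b in B].

Definition right_haar_null (G : ptopologicalType) (mul : G -> G -> G)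
    (A : set G) : Prop :=
  exists B : set G, [/\ borel B, A `<=` B &
    exists mu : borel_probability G,
      forall g : G, mu (rtranslate mul B g : set (g_sigma_algebraType (@open G))) = 0%E].

(* Main.v *)
Require Import Defs.
From mathcomp Require Import all_boot all_order all_algebra.
From mathcomp Require Import all_classical all_reals all_analysis.
From mathcomp Require Import Rstruct Rstruct_topology.
From mathcomp Require Import lra.
Import Order.TTheory GRing.Theory Num.Theory Num.Def.
Local Open Scope classical_set_scope.
Local Open Scope ring_scope.
Definition kseq (t : RR) (n : nat) : nat := truncn (2 ^+ n * t).

Lemma truncn2 (x : RR) : (truncn (2 * x))./2 = truncn x.
Proof.
have [x0|x0] := leP 0 x; last first.
  rewrite (_ : truncn x = 0)%N; last by apply/truncn0Pn; rewrite -ltNge; lra.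
  rewrite (_ : truncn (2 * x) = 0)%N //; by apply/truncn0Pn; rewrite -ltNge; lra.
set j := truncn (2 * x).
have /andP[h1 h2] := truncn_itv (ltac:(lra) : 0 <= 2 * x).
have ej : j = ((j./2) * 2 + odd j)%N by rewrite addnC muln2 odd_double_half.
have ej' : (j%:R : RR) = (j./2)%:R * 2 + (odd j)%:R.
  by rewrite {1}ej natrD natrM.
have o0 : (0 : RR) <= (odd j)%:R by apply: ler0n.
have o1 : ((odd j)%:R : RR) <= 1 by case: (odd j).
symmetry; apply: truncn_def; apply/andP; split.
  rewrite -/j in h1; lra.
rewrite -/j in h2; rewrite -!natr1 in h2 *; lra.
Qed.

Lemma kseqS t n : (kseq t n.+1)./2 = kseq t n.
Proof. by rewrite /kseq exprS -mulrA truncn2. Qed.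

Lemma truncn_set (x : RR) (k : nat) :
  (truncn x = k) <-> ((k == 0)%N || (k%:R <= x)) /\ x < k.+1%:R.
Proof.
have [x0|x0] := leP 0 x.
  split.
    move=> <-; have /andP[h1 h2] := truncn_itv x0; split => //; by rewrite h1 orbT.
  move=> [/orP[/eqP k0|h1] h2]; apply: truncn_def; apply/andP; split => //.
  by rewrite k0.
have t0 : truncn x = 0%N by apply/truncn0Pn; rewrite -ltNge; lra.
rewrite t0; split.
  move=> <-; split => //; lra.
move=> [/orP[/eqP k0|h1] h2] //.
exfalso; have : (0 : RR) <= k%:R by apply: ler0n.
lra.
Qed.

Lemma meas_kseq N k : measurable ([set t : RR | kseq t N = k] : set (measurableTypeR RR)).
Proof.
have -> : [set t : RR | kseq t N = k] =
   ( *%R (2 ^+ N)) @^-1` ((if (k == 0)%N then setT else `[k%:R, +oo[%classic)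
       `&` `]-oo, k.+1%:R[%classic).
  apply/seteqP; split => t /=; rewrite /kseq truncn_set.
    case=> h1 h2; split; last by rewrite /= in_itv /= h2.
    by case: (k == 0)%N h1 => //= h1; rewrite in_itv /= h1 andbT.
  case: (k == 0)%N => /= -[h1]; rewrite in_itv /= => h2; split => //.
  by move: h1; rewrite in_itv /= andbT.
rewrite -[X in measurable X]setTI.
apply: measurable_realfun.mulrl_measurable => //.
apply: measurableI => //.
by case: (k == 0)%N.
Qed.

Section S.
Variables (G : ptopologicalType) (mul : G -> G -> G) (inv : G -> G) (one : G).
Hypothesis HG : is_topological_group mul inv one.

Lemma gmulA x y z : mul x (mul y z) = mul (mul x y) z.
Proof. by case: HG. Qed.
Lemma gmul1 x : mul one x = x. Proof. by case: HG => _ /(_ x) []. Qed.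
Lemma gmulr1 x : mul x one = x. Proof. by case: HG => _ /(_ x) []. Qed.
Lemma gmulV x : mul x (inv x) = one. Proof. by case: HG => _ _ /(_ x) []. Qed.
Lemma gmulVl x : mul (inv x) x = one. Proof. by case: HG => _ _ /(_ x) []. Qed.
Lemma ginv_uniq x y : mul x y = one -> y = inv x.
Proof.
move=> h; rewrite -[y]gmul1 -(gmulVl x) -gmulA h gmulr1 //.
Qed.
Lemma ginvM x y : inv (mul x y) = mul (inv y) (inv x).
Proof.
apply/esym/ginv_uniq; rewrite -gmulA [mul y _]gmulA gmulV gmul1 gmulV //.
Qed.
Lemma gcont2 : continuous (fun p : G * G => mul p.1 p.2). Proof. by case: HG. Qed.
Lemma gcontinv : continuous inv. Proof. by case: HG. Qed.

Lemma gcont_h : continuous (fun z : G * G => mul z.1 (inv z.2)).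
Proof.
move=> z.
have h1 : continuous (fun z : G * G => (z.1, inv z.2)).
  move=> w; apply: cvg_pair.
  - exact: cvg_fst.
  - exact: (continuous_comp cvg_snd (gcontinv _)).
exact: (continuous_comp (h1 z) (gcont2 _)).
Qed.

Lemma gcontr c : continuous (fun y => mul y c).
Proof.
move=> y.
have h1 : continuous (fun y : G => (y, c)).
  move=> w; apply: cvg_pair; [exact: cvg_id | exact: cvg_cst].
exact: (continuous_comp (h1 y) (gcont2 _)).
Qed.
Variables (d : G -> G -> RR).
Hypotheses (Hm : is_metric d) (Ht : metric_induces_topology d).
Lemma d_ge0 x y : 0 <= d x y. Proof. by case: Hm. Qed.
Lemma d_sym x y : d x y = d y x. Proof. by case: Hm. Qed.
Lemma d_tri x y z : d x z <= d x y + d y z. Proof. by case: Hm. Qed.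
Lemma d_eq0 x y : d x y = 0 -> x = y. Proof. by case: Hm => _ /(_ x y) [+ _]. Qed.
Lemma d_xx x : d x x = 0. Proof. by case: Hm => _ /(_ x x) [_ ->]. Qed.
Lemma ball_nbhs x e : 0 < e -> nbhs x [set y | d x y < e].
Proof. by move=> e0; apply/Ht; exists e. Qed.
Lemma nbhs_ball x A : nbhs x A -> exists2 e, 0 < e & [set y | d x y < e] `<=` A.
Proof. by move/Ht. Qed.
Lemma d_hausdorff : hausdorff_space G.
Proof.
move=> p q cl; apply: d_eq0; apply/eqP; rewrite eq_le d_ge0 andbT.
apply/negP => /negP; rewrite -ltNge => dpq.
have [y [/= h1 h2]] := cl _ _ (ball_nbhs p (d p q / 2) ltac:(lra)) (ball_nbhs q (d p q / 2) ltac:(lra)).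
have := d_tri p y q; rewrite (d_sym y q); lra.
Qed.
Variable K : set G.
Hypothesis HK : compact K.
Hypothesis Hnlc : ~ locally_compact [set: G].

Definition Lset := [set (fun z : G * G => mul z.1 (inv z.2)) z | z in K `*` K].

Lemma Lcompact : compact Lset.
Proof.
apply: continuous_compact; last exact: compact_setX.
apply: continuous_subspaceT; exact: gcont_h.
Qed.

Lemma Lclosed : closed Lset.
Proof. exact: compact_closed d_hausdorff Lcompact. Qed.

Lemma exq p (r : RR) : 0 < r -> exists q, d p q < r /\ ~ Lset (mul q (inv p)).
Proof.
move=> r0; apply: contrapT => H.
have H' : forall q, d p q < r -> Lset (mul q (inv p)).
  by move=> q hq; apply: contrapT => nL; apply: H; exists q.
apply: Hnlc => x _; rewrite withinET.
exists [set mul w x | w in Lset]; last first.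
  split.
    apply: continuous_compact; last exact: Lcompact.
    apply: continuous_subspaceT; exact: gcontr.
  apply: compact_closed; first exact: d_hausdorff.
  apply: continuous_compact; last exact: Lcompact.
  apply: continuous_subspaceT; exact: gcontr.
have hc := continuous_comp (gcontr (inv x) x) (gcontr p _).
have e : mul (mul x (inv x)) p = p.
  by rewrite /= gmulV gmul1.
have hn := hc _ (eq_rect_r (fun z => nbhs z _) (ball_nbhs p r r0) e).

have hn2 : nbhs x ((mul^~ p \o mul^~ (inv x)) @^-1` [set y | d p y < r]) by rewrite e in hn; exact: hn.
apply: filterS hn2 => y /= hy.
exists (mul y (inv x)).
  have := H' _ hy; by rewrite -gmulA gmulV gmulr1.
by rewrite -gmulA gmulVl gmulr1.
Qed.

Lemma small3 (a b c : RR) : 0 < a -> 0 < b -> 0 < c ->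
  exists r : RR, [/\ 0 < r, 2 * r <= a, 2 * r <= b & r <= c].
Proof.
move=> a0 b0 c0; exists (Num.min (Num.min a b) c / 2).
have h1 := ge_min (Num.min a b) c. 
have m1 : Num.min (Num.min a b) c <= Num.min a b by rewrite ge_min lexx.
have m2 : Num.min (Num.min a b) c <= c by rewrite ge_min lexx orbT.
have m3 : Num.min a b <= a by rewrite ge_min lexx.
have m4 : Num.min a b <= b by rewrite ge_min lexx orbT.
have m5 : 0 < Num.min (Num.min a b) c by rewrite !lt_min a0 b0 c0.
split; lra.
Qed.

Lemma child p (rho : RR) : 0 < rho -> exists qr : G * RR,
  [/\ 0 < qr.2, qr.2 <= rho / 8, d p qr.1 < rho / 2 &
   forall y z, d qr.1 y < 2 * qr.2 -> d p z < 2 * qr.2 -> ~ Lset (mul y (inv z))].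
Proof.
move=> r0; have [q [dq nL]] := exq p (rho / 2) ltac:(lra).
have oC : open (~` Lset) by apply: closed_openC; exact: Lclosed.
have nC : nbhs (mul (q, p).1 (inv (q, p).2)) (~` Lset).
  by apply: open_nbhs_nbhs; split.
have := gcont_h (q, p) _ nC.
case=> [[A B]] /= [nA nB] sub.
have [e1 e10 s1] := nbhs_ball _ _ nA.
have [e2 e20 s2] := nbhs_ball _ _ nB.
have [|r [r0' r1 r2 r3]] := @small3 e1 e2 (rho / 8) e10 e20 _.
  lra.
exists (q, r); split => //= y z hy hz.
have : (A `*` B) (y, z) by split; [apply: s1 => /=; lra | apply: s2 => /=; lra].
by move/sub.
Qed.

Definition childP p (rho : RR) (qr : G * RR) :=
  0 < rho -> [/\ 0 < qr.2, qr.2 <= rho / 8, d p qr.1 < rho / 2 &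
   forall y z, d qr.1 y < 2 * qr.2 -> d p z < 2 * qr.2 -> ~ Lset (mul y (inv z))].

Definition ch p rho : G * RR := [get qr : G * RR | childP p rho qr].

Lemma chP p rho : childP p rho (ch p rho).
Proof.
apply: (@getPex _ (childP p rho)).
have [r0|r0] := boolp.pselect (0 < rho).
  by have [qr h] := child p rho r0; exists qr.
by exists (p, rho) => h; exfalso; apply: r0.
Qed.

Fixpoint node (n k : nat) : G * RR :=
  if n is n'.+1 then
    let pr := node n' k./2 in
    if odd k then ch pr.1 pr.2 else (pr.1, (ch pr.1 pr.2).2)
  else (one, 1).

Lemma node_pos n k : 0 < (node n k).2.
Proof.
elim: n k => [|n IH] k /=; first by lra.
have := chP (node n k./2).1 _ (IH k./2); case=> h1 h2 h3 h4.
by case: (odd k).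
Qed.

Lemma node_step n k :
  d (node n k./2).1 (node n.+1 k).1 + (node n.+1 k).2 <= (node n k./2).2 /\
  (node n.+1 k).2 <= (node n k./2).2 / 8.
Proof.
have r0 := node_pos n k./2.
have := chP (node n k./2).1 _ r0; case=> h1 h2 h3 h4.
rewrite /=; case: (odd k) => /=; split => //; try lra.
by rewrite d_xx; lra.
Qed.

Lemma node_sep n j j' : j./2 = j'./2 -> odd j -> ~~ odd j' ->
  forall y z, d (node n.+1 j).1 y < 2 * (node n.+1 j).2 ->
    d (node n.+1 j').1 z < 2 * (node n.+1 j').2 -> ~ Lset (mul y (inv z)).
Proof.
move=> e oj oj'; rewrite /= oj (negbTE oj') /= -e.
have r0 := node_pos n j./2.
by have := chP (node n j./2).1 _ r0; case=> h1 h2 h3 h4.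
Qed.

Definition valid (ks : nat -> nat) := forall n, (ks n.+1)./2 = ks n.
Definition pt (ks : nat -> nat) n := (node n (ks n)).1.
Definition rd (ks : nat -> nat) n := (node n (ks n)).2.

Lemma rd_pos ks n : 0 < rd ks n.
Proof. exact: node_pos. Qed.

Lemma tele ks : valid ks -> forall n m, (n <= m)%N ->
  d (pt ks n) (pt ks m) + rd ks m <= rd ks n.
Proof.
move=> v n; elim=> [|m IH] nm.
  by move: nm; rewrite leqn0 => /eqP ->; rewrite d_xx add0r.
move: nm; rewrite leq_eqVlt => /orP[/eqP ->|nm].
  by rewrite d_xx add0r.
have := IH nm; have [s1 s2] := node_step m (ks m.+1).
rewrite v in s1 s2; rewrite /pt /rd in IH s1 s2 *.
have := d_tri (node n (ks n)).1 (node m (ks m)).1 (node m.+1 (ks m.+1)).1.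
lra.
Qed.

Lemma rd_bound ks : valid ks -> forall n, rd ks n * n.+1%:R <= 1.
Proof.
move=> v; elim=> [|n IH]; first by rewrite /rd /= mulr1.
have [_ s2] := node_step n (ks n.+1); rewrite v in s2; rewrite -/(rd ks n) -/(rd ks n.+1) in s2.
have p1 := rd_pos ks n.+1.
have e : (n.+2%:R : RR) = n.+1%:R + 1 by rewrite -natr1.
have n0 : (0 : RR) <= n%:R by apply: ler0n.
have e2 : (n.+1%:R : RR) = n%:R + 1 by rewrite -natr1.
rewrite e; rewrite e2 in IH *.
nra.
Qed.

Lemma exN ks : valid ks -> forall eps : RR, 0 < eps -> exists N, 2 * rd ks N < eps.
Proof.
move=> v eps e0.
have h : (0 : RR) <= 2 / eps by apply: divr_ge0; lra.
have hb := archi_boundP h.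
set N := archi_bound (2 / eps) in hb.
exists N.
have := rd_bound _ v N; have := rd_pos ks N.
have e : (N.+1%:R : RR) = N%:R + 1 by rewrite -natr1.
rewrite e.
have hb' : 2 < eps * N%:R.
  by rewrite -(ltr_pdivrMl _ _ e0) mulrC.
nra.
Qed.

Hypothesis Hc : complete_metric d.

Definition limP ks l := forall eps : RR, 0 < eps ->
  exists N, forall n, (N <= n)%N -> d (pt ks n) l < eps.

Definition lim_ks ks := [get l : G | limP ks l].

Lemma lim_ksP ks : valid ks -> limP ks (lim_ks ks).
Proof.
move=> v; apply: (@getPex _ (limP ks)); apply: Hc => eps e0.
have [N hN] := exN _ v _ e0; exists N => m n hm hn.
have := tele _ v _ _ hm; have := tele _ v _ _ hn.
have := d_tri (pt ks m) (pt ks N) (pt ks n).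
have := rd_pos ks m; have := rd_pos ks n.
have := d_sym (pt ks m) (pt ks N); lra.
Qed.

Lemma P1 ks : valid ks -> forall n, d (pt ks n) (lim_ks ks) < 2 * rd ks n.
Proof.
move=> v n; have [N hN] := lim_ksP _ v _ (rd_pos ks n).
have := hN (maxn N n) (leq_maxl _ _).
have := tele _ v _ _ (leq_maxr N n).
have := d_tri (pt ks n) (pt ks (maxn N n)) (lim_ks ks).
have := rd_pos ks (maxn N n).
lra.
Qed.

Lemma kseq_valid t : valid (kseq t).
Proof. exact: kseqS. Qed.

Definition ff (t : measurableTypeR RR) : g_sigma_algebraType (@open G) :=
  lim_ks (kseq t).

Lemma ffP t n : d (pt (kseq t) n) (ff t) < 2 * rd (kseq t) n.
Proof. exact: P1 (kseq_valid t) n. Qed.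

Lemma mff : measurable_fun setT ff.
Proof.
apply: (@measurability _ _ _ _ setT ff (@open G)) => //.
move=> _ [U oU <-]; rewrite setTI.
pose S N k := [set t : measurableTypeR RR | kseq t N = k /\
   [set y | d (node N k).1 y < 2 * (node N k).2] `<=` U].
have -> : ff @^-1` U = \bigcup_N \bigcup_k S N k.
  apply/seteqP; split => t /=.
    move=> Ut.
    have [e e0 be] := nbhs_ball _ _ (open_nbhs_nbhs (conj oU Ut)).
    have [N hN] := exN _ (kseq_valid t) _ (ltac:(lra) : 0 < e / 2).
    exists N => //; exists (kseq t N) => //; split => // y /= hy.
    apply: be => /=.
    have := ffP t N; rewrite /pt /rd in hN *.
    have := d_tri (ff t) (node N (kseq t N)).1 y.
    have := d_sym (ff t) (node N (kseq t N)).1.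
    lra.
  move=> [N _ [k _ [hk sub]]]; apply: sub => /=.
  by have := ffP t N; rewrite /pt /rd hk.
apply: bigcupT_measurable => N; apply: bigcupT_measurable => k.
have [h|h] := boolp.pselect ([set y | d (node N k).1 y < 2 * (node N k).2] `<=` U).
  have -> : S N k = [set t | kseq t N = k].
    by apply/seteqP; split => t /= [] //.
  exact: meas_kseq.
have -> : S N k = set0.
  by apply/seteqP; split => t // [].
exact: measurable0.
Qed.

Lemma sep t t' : kseq t 0 = kseq t' 0 ->
  Lset (mul (ff t) (inv (ff t'))) -> Lset (mul (ff t') (inv (ff t))) ->
  forall n, kseq t n = kseq t' n.
Proof.
move=> h0 L1 L2; elim=> [//|n IH].
have e : (kseq t n.+1)./2 = (kseq t' n.+1)./2 by rewrite !kseqS.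
have ej j : j = ((j./2) * 2 + odd j)%N by rewrite addnC muln2 odd_double_half.
case o1: (odd (kseq t n.+1)); case o2: (odd (kseq t' n.+1)).
- by rewrite (ej (kseq t n.+1)) (ej (kseq t' n.+1)) e o1 o2.
- exfalso; exact: (node_sep n _ _ e o1 (negbT o2) (ff t) (ff t') (ffP t n.+1) (ffP t' n.+1) L1).
- exfalso; exact: (node_sep n _ _ (esym e) o2 (negbT o1) (ff t') (ff t) (ffP t' n.+1) (ffP t n.+1) L2).
- by rewrite (ej (kseq t n.+1)) (ej (kseq t' n.+1)) e o1 o2.
Qed.
End S.

Lemma kseq_inj (t t' : RR) : 0 <= t -> 0 <= t' ->
  (forall n, kseq t n = kseq t' n) -> t = t'.
Proof.
move=> t0 t0' h; apply: contrapT => ne.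
have dpos : 0 < `|t - t'| by rewrite normr_gt0 subr_eq0; apply/eqP.
have h1 : (0 : RR) <= 1 / `|t - t'| by apply: divr_ge0 => //; apply: ltW.
have hb := archi_boundP h1.
set n := archi_bound (1 / `|t - t'|) in hb; clearbody n.
have p2 : (0 : RR) < 2 ^+ n by apply: exprn_gt0.
have i1 := truncn_itv (mulr_ge0 (ltW p2) t0).
have i2 := truncn_itv (mulr_ge0 (ltW p2) t0').
rewrite -/(kseq t n) (h n) in i1; rewrite -/(kseq t' n) in i2.
move/andP: i1 => [a1 a2]; move/andP: i2 => [b1 b2].
have ek : ((kseq t' n).+1%:R : RR) = (kseq t' n)%:R + 1 by rewrite -natr1.
rewrite ek in a2 b2.
have hn : (n%:R : RR) < 2 ^+ n.
  by rewrite -natrX ltr_nat ltn_expl.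
have hd : 2 ^+ n * `|t - t'| < 1.
  rewrite -(@ger0_norm _ (2 ^+ n)); last exact: ltW.
  rewrite -normrM mulrBr.
  set X := 2 ^+ n * t in a1 a2 *; set Y := 2 ^+ n * t' in b1 b2 *.
  rewrite ltr_norml; apply/andP; split; clear -a1 a2 b1 b2; lra.
have hm : n%:R * `|t - t'| < 2 ^+ n * `|t - t'| by rewrite ltr_pM2r.
have : 1 < n%:R * `|t - t'|.
  by rewrite -(ltr_pdivrMr _ _ dpos) mul1r -[X in X < _]mul1r.
move=> h3; clear -hd hm h3; lra.
Qed.

Lemma closed_meas (G : ptopologicalType) (A : set G) : closed A ->
  measurable (A : set (g_sigma_algebraType (@open G))).
Proof.
move=> cA.
have h : measurable (~` A : set (g_sigma_algebraType (@open G))).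
  by apply: sub_sigma_algebra; exact: closed_openC.
by rewrite -[A]setCK; exact: measurableC.
Qed.

Theorem proposition6p7 (G : ptopologicalType)
    (mul : G -> G -> G) (inv : G -> G) (one : G)
    (HG : is_topological_group mul inv one)
    (Hpolish : polish_space G)
    (Hnlc : ~ locally_compact [set: G])
    (K : set G) (HK : compact K) :
  right_haar_null mul K.
Proof.
case: Hpolish => _ [d [Hm Ht Hc]].
have hsd := @d_hausdorff G d Hm Ht.
exists K; split => //.
  exact: closed_meas (compact_closed hsd HK).
have mf := @mff G mul inv one HG d Hm Ht K HK Hnlc Hc.
have ab : (0 : RR) < 1 / 2 by lra.
pose P := uniform_prob ab.
pose X := mfun_Sub (mem_set mf).
exists (distribution P X) => g.
rewrite /distribution /pushforward /=.
set E := ff G mul inv one d K @^-1` rtranslate mul K g.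
have cKg : closed (rtranslate mul K g).
  apply: (compact_closed hsd); apply: continuous_compact HK.
  apply: continuous_subspaceT; exact: (@gcontr G mul inv one HG g).
have mE : measurable E.
  by rewrite /E -[X in measurable X]setTI; apply: (mf) => //; exact: closed_meas.
have mI : measurable (`[0, 1/2]%classic : set (measurableTypeR RR)) by [].
have mEI : measurable (E `&` `[0, 1/2]%classic) by exact: measurableI.
have key : exists t0, E `&` `[0, 1/2]%classic `<=` [set t0].
  have [[t0 [E0 I0]]|nh] := boolp.pselect (exists t0, (E `&` `[0, 1/2]%classic) t0); last first.
    by exists 0 => t ht; exfalso; apply: nh; exists t.
  exists t0 => t [Et It] /=.
  move: It I0; rewrite /= !in_itv /= => /andP[t0' t1] /andP[t00 t01].
  case: Et => a Ka ea; case: E0 => b Kb eb.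
  have k0 u : 0 <= u -> u <= 1/2 -> kseq u 0 = kseq t0 0.
    move=> u0 u1; rewrite /kseq expr0 !mul1r.
    have -> : truncn u = 0%N by apply/truncn0Pn; rewrite -ltNge; lra.
    by apply/esym/truncn0Pn; rewrite -ltNge; lra.
  apply: kseq_inj => //.
  apply: (@sep G mul inv one HG d Hm Ht K HK Hnlc Hc) => //.
  - exact: k0.
  - exists (a, b) => //=; rewrite -ea -eb (@ginvM G mul inv one HG).
    by rewrite -(@gmulA G mul inv one HG) [mul g _](@gmulA G mul inv one HG)
      (@gmulV G mul inv one HG) (@gmul1 G mul inv one HG).
  - exists (b, a) => //=; rewrite -ea -eb (@ginvM G mul inv one HG).
    by rewrite -(@gmulA G mul inv one HG) [mul g _](@gmulA G mul inv one HG)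
      (@gmulV G mul inv one HG) (@gmul1 G mul inv one HG).
have [t0 sub0] := key.
have lam0 : lebesgue_measure (E `&` `[0, 1/2]%classic) = 0%E.
  apply/eqP; rewrite eq_le measure_ge0 andbT.
  rewrite -(lebesgue_measure_set1 t0).
  by apply: le_measure => //; rewrite inE.
have PEI : P (E `&` `[0, 1/2]%classic) = 0%E.
  exact: ((null_content_dominatesP _ _).1 (dominates_uniform_prob ab)) _ mEI lam0.
rewrite -PEI /P /uniform_prob integral_uniform_pdf [in RHS]integral_uniform_pdf.
by rewrite -setIA setIid.
Qed.
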